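(* For every $K>0$ there exist a uniformly continuous function $\hat g_K:\mathbb{R}\to\mathbb{R}$ and a number $x_K\ge K$ such that: (i) $\hat g_K$ is affine on $[x_K,\infty)$ and on $(-\infty,-x_K]$; (ii) $\hat g_K=\hat g$ on $[-K,K]$; (iii) $\hat g_K\ge\hat g$; (iv) $\hat g_K-\bar\Gamma$ is concave for every $C^2$ function $\bar\Gamma$ satisfying $\partial^2_{xx}\bar\Gamma=\bar\gamma$. Moreover, the family $(\hat g_K)_{K>0}$ is uniformly bounded (in absolute value) by a function with linear growth and converges to $\hat g$ uniformly on compact sets as $K\to\infty$.
   Context: Standing assumptions: $f\in C^2_b(\mathbb{R})$ with $\inf f>0$; $\bar\gamma:\mathbb{R}\to\mathbb{R}$ is bounded and continuous with $\iota\le\bar\gamma\le1/f-\iota$ for some $\iota>0$; $g:\mathbb{R}\to\mathbb{R}$ is lower semicontinuous with $g^-$ bounded and $g^+$ of linear growth; $\hat g:=(g-\bar\Gamma)^{\rm conc}+\bar\Gamma$ where $\bar\Gamma$ is any $C^2$ function with $\partial^2_{xx}\bar\Gamma=\bar\gamma$ and ${}^{\rm conc}$ denotes the concave envelope (independent of the choice of $\bar\Gamma$); $\hat g$ is assumed uniformly continuous. *)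

(* Defs.v *)
From Stdlib Require Import Reals Lra.
From Coquelicot Require Import Coquelicot.
Open Scope R_scope.

Definition concave (u : R -> R) : Prop :=
  forall x y t, 0 <= t <= 1 ->
    t * u x + (1 - t) * u y <= u (t * x + (1 - t) * y).

(* concave envelope: pointwise infimum of all concave majorants
   (the smallest concave function dominating h, when it exists) *)
Definition conc (h : R -> R) (x : R) : R :=
  real (Glb_Rbar (fun r => exists u, concave u /\ (forall y, h y <= u y) /\ r = u x)).

Definition C2_with_second_deriv (G gam : R -> R) : Prop :=
  exists dG : R -> R, forall x, is_derive G x (dG x) /\ is_derive dG x (gam x).

Definition C2b (f : R -> R) : Prop :=
  exists f1 f2 : R -> R,
    (forall x, is_derive f x (f1 x) /\ is_derive f1 x (f2 x) /\ continuous f2 x) /\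
    exists B, forall x, Rabs (f x) <= B /\ Rabs (f1 x) <= B /\ Rabs (f2 x) <= B.

Definition bounded_fun (h : R -> R) : Prop := exists B, forall x, Rabs (h x) <= B.

Definition lower_semicontinuous (h : R -> R) : Prop :=
  forall x eps, 0 < eps -> exists delta, 0 < delta /\
    forall y, Rabs (y - x) < delta -> h x - eps < h y.

Definition unif_continuous (h : R -> R) : Prop :=
  forall eps, 0 < eps -> exists delta, 0 < delta /\
    forall x y, Rabs (x - y) < delta -> Rabs (h x - h y) < eps.

Definition ghat (g Gam : R -> R) (x : R) : R :=
  conc (fun y => g y - Gam y) x + Gam x.

(* Main.v *)
Require Import Defs.
From Stdlib Require Import Reals Lra.
From Coquelicot Require Import Coquelicot.
Open Scope R_scope.
Lemma deriv_cont (F : R -> R) (F1 x : R) : is_derive F x F1 -> continuity_pt F x.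
Proof. intro H. apply continuity_pt_filterlim. apply (ex_derive_continuous (K:=R_AbsRing) (V:=R_NormedModule)). exists F1; exact H. Qed.

Lemma deriv_sub_lin (F : R -> R) (F1 a x : R) : is_derive F x F1 ->
  is_derive (fun y => F y - a * y) x (F1 - a).
Proof.
  intro H. 
  assert (H2 := is_derive_minus F (fun y => a * y) x F1 (a * 1) H (is_derive_scal (fun t => t) x a 1 (is_derive_id x))).
  replace (F1 - a) with (minus F1 (a*1)). exact H2.
  unfold minus, plus, opp; simpl. ring.
Qed.

Lemma mono_deriv (F F1 : R -> R) : (forall x, is_derive F x (F1 x)) -> (forall x, 0 <= F1 x) ->
  forall x y, x <= y -> F x <= F y.
Proof.
  intros HD Hp x y Hxy.
  destruct (MVT_gen F x y F1) as [c [Hc Heq]].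
  - intros; apply HD.
  - intros; eapply deriv_cont; apply HD.
  - specialize (Hp c). nra.
Qed.

Lemma tangent (F F1 F2 : R -> R) : (forall x, is_derive F x (F1 x)) -> (forall x, is_derive F1 x (F2 x)) ->
  (forall x, 0 <= F2 x) -> forall x y, F x + F1 x * (y - x) <= F y.
Proof.
  intros HF HF1 HF2 x y.
  assert (Hm : forall a b, a <= b -> F1 a <= F1 b) by (apply (mono_deriv F1 F2); auto).
  destruct (MVT_gen (fun y => F y - F1 x * y) x y (fun c => F1 c - F1 x)) as [c [Hc Heq]].
  - intros; apply deriv_sub_lin; apply HF.
  - intros z _. apply continuity_pt_minus. eapply deriv_cont; apply HF.
    apply continuity_pt_mult. apply continuity_pt_const. intros u v; reflexivity. apply continuity_pt_id.
  - destruct (Rle_dec x y) as [Hxy|Hxy].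
    + rewrite Rmin_left in Hc by lra. rewrite Rmax_right in Hc by lra.
      assert (F1 x <= F1 c) by (apply Hm; lra). nra.
    + rewrite Rmin_right in Hc by lra. rewrite Rmax_left in Hc by lra.
      assert (F1 c <= F1 x) by (apply Hm; lra). nra.
Qed.

Lemma glb_prop (E : R -> Prop) (a b : R) : E b -> (forall r, E r -> a <= r) ->
  a <= real (Glb_Rbar E) <= b /\
  (forall c, (forall r, E r -> c <= r) -> c <= real (Glb_Rbar E)).
Proof.
  intros Eb Ha. destruct (Glb_Rbar_correct E) as [Hlb Hglb].
  assert (H1 : Rbar_le a (Glb_Rbar E)) by (apply Hglb; intros r Hr; simpl; apply Ha, Hr).
  assert (H2 : Rbar_le (Glb_Rbar E) b) by (apply Hlb, Eb).
  destruct (Glb_Rbar E) as [l| |]; simpl in *; try contradiction.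
  split; [lra|]. intros c Hc.
  assert (H3 : Rbar_le c l) by (apply Hglb; intros r Hr; simpl; apply Hc, Hr).
  exact H3.
Qed.

Lemma conc_spec (h u0 : R -> R) : concave u0 -> (forall y, h y <= u0 y) ->
  (forall x, h x <= conc h x) /\
  (forall u, concave u -> (forall y, h y <= u y) -> forall x, conc h x <= u x) /\
  concave (conc h).
Proof.
  intros Hu0 Hm.
  assert (K : forall x, h x <= conc h x /\
     forall c, (forall u, concave u -> (forall y, h y <= u y) -> c <= u x) -> c <= conc h x).
  { intro x. unfold conc.
    destruct (glb_prop (fun r => exists u, concave u /\ (forall y, h y <= u y) /\ r = u x) (h x) (u0 x))
      as [[H1 _] H3].
    - exists u0; auto.
    - intros r [u [_ [Hu ->]]]; apply Hu.
    - split; auto. intros c Hc. apply H3. intros r [u [Hcu [Hu ->]]]. apply Hc; auto. }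
  split; [intro x; apply (proj1 (K x))|]. split.
  - intros u Hu Hhu x. unfold conc.
    destruct (glb_prop (fun r => exists u, concave u /\ (forall y, h y <= u y) /\ r = u x) (h x) (u x))
      as [[_ H2] _]; auto.
    + exists u; auto.
    + intros r [v [_ [Hv ->]]]; apply Hv.
  - intros x y t Ht. apply (proj2 (K _)). intros u Hu Hhu.
    assert (conc h x <= u x).
    { unfold conc.
      destruct (glb_prop (fun r => exists u, concave u /\ (forall y, h y <= u y) /\ r = u x) (h x) (u x))
      as [[_ H2] _]; auto. exists u; auto. intros r [v [_ [Hv ->]]]; apply Hv. }
    assert (conc h y <= u y).
    { unfold conc.
      destruct (glb_prop (fun r => exists u, concave u /\ (forall y', h y' <= u y') /\ r = u y) (h y) (u y))
      as [[_ H2] _]; auto. exists u; auto. intros r [v [_ [Hv ->]]]; apply Hv. }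
    specialize (Hu x y t Ht). nra.
Qed.

Lemma concave_of_supp (F m : R -> R) : (forall z x, F x <= F z + m z * (x - z)) -> concave F.
Proof.
  intros H x y t Ht. set (z := t * x + (1 - t) * y).
  pose proof (H z x). pose proof (H z y).
  assert (E : t * (x - z) + (1 - t) * (y - z) = 0) by (unfold z; ring).
  assert (t * F x <= t * (F z + m z * (x - z))) by (apply Rmult_le_compat_l; lra).
  assert ((1-t) * F y <= (1-t) * (F z + m z * (y - z))) by (apply Rmult_le_compat_l; lra).
  assert (E2 : t * (F z + m z * (x - z)) + (1-t) * (F z + m z * (y - z)) = F z + m z * (t * (x - z) + (1 - t) * (y - z))) by ring.
  rewrite E in E2. lra.
Qed.

Lemma concave_min (F G : R -> R) : concave F -> concave G -> concave (fun x => Rmin (F x) (G x)).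
Proof.
  intros HF HG x y t Ht. pose proof (HF x y t Ht). pose proof (HG x y t Ht).
  pose proof (Rmin_l (F x) (G x)). pose proof (Rmin_r (F x) (G x)).
  pose proof (Rmin_l (F y) (G y)). pose proof (Rmin_r (F y) (G y)).
  apply Rmin_glb; nra.
Qed.

Lemma chord (U : R -> R) : concave U -> forall y z x, y < z < x ->
  (x - z) * U y + (z - y) * U x <= (x - y) * U z.
Proof.
  intros HU y z x Hyzx. set (t := (x - z) / (x - y)).
  assert (Ht : 0 <= t <= 1).
  { unfold t; split. apply Rdiv_le_0_compat; lra.
    apply (proj1 (Rdiv_le_1 (x - z) (x - y) ltac:(lra))); lra. }
  pose proof (HU y x t Ht) as H.
  assert (E : t * y + (1 - t) * x = z) by (unfold t; field; lra).
  rewrite E in H.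
  assert (E2 : (x - z) * U y + (z - y) * U x = (x - y) * (t * U y + (1 - t) * U x)) by (unfold t; field; lra).
  rewrite E2. apply Rmult_le_compat_l; lra.
Qed.

Definition supp_of (U : R -> R) (z : R) : R -> Prop :=
  fun q => exists x, z < x /\ q = (U x - U z) / (x - z).

Lemma supp (U : R -> R) (HU : concave U) (z : R) : {m | forall x, U x <= U z + m * (x - z)}.
Proof.
  assert (Hub : forall q, supp_of U z q -> q <= U z - U (z - 1)).
  { intros q [x [Hx ->]]. pose proof (chord U HU (z-1) z x ltac:(lra)).
    apply Rle_div_l; lra. }
  destruct (completeness (supp_of U z)) as [m [Hm1 Hm2]].
  - exists (U z - U (z - 1)); intros q Hq; apply Hub, Hq.
  - exists ((U (z+1) - U z) / (z + 1 - z)); exists (z+1); split; [lra|reflexivity].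
  - exists m. intro x. destruct (Rtotal_order x z) as [Hx|[Hx|Hx]].
    + assert (m <= (U z - U x) / (z - x)).
      { apply Hm2. intros q [w [Hw ->]]. pose proof (chord U HU x z w ltac:(lra)).
        apply Rle_div_l; [lra|].
        replace ((U z - U x) / (z - x) * (w - z)) with ((U z - U x) * (w - z) / (z - x)) by (field; lra).
        apply Rle_div_r; lra. }
      assert (m * (z - x) <= U z - U x).
      { apply Rle_div_r in H; [|lra]. lra. }
      nra.
    + subst; lra.
    + assert ((U x - U z) / (x - z) <= m) by (apply Hm1; exists x; split; [lra|reflexivity]).
      apply Rle_div_l in H; lra.
Qed.

Lemma min3_lip a1 b1 c1 e1 a2 b2 c2 e2 :
  Rabs (Rmin a1 (Rmin b1 c1) + e1 - (Rmin a2 (Rmin b2 c2) + e2)) <=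
  Rabs (a1 - a2) + Rabs (b1 - b2) + Rabs (c1 - c2) + Rabs (e1 - e2).
Proof.
  unfold Rmin. repeat destruct Rle_dec; split_Rabs; lra.
Qed.

Lemma lip_tan (G dG : R -> R) (a b : R) :
  (forall x y, G x + dG x * (y - x) <= G y) ->
  (forall x y, x <= y -> dG x <= dG y) ->
  forall x y, a <= x <= b -> a <= y <= b ->
  Rabs (G x - G y) <= (Rabs (dG a) + Rabs (dG b)) * Rabs (x - y).
Proof.
  intros HT Hm.
  assert (W : forall x y, a <= x <= b -> a <= y <= b -> x <= y ->
    Rabs (G x - G y) <= (Rabs (dG a) + Rabs (dG b)) * Rabs (x - y)).
  { intros x y Hx Hy Hxy.
    pose proof (HT x y). pose proof (HT y x).
    pose proof (Hm a x ltac:(lra)). pose proof (Hm y b ltac:(lra)).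
    rewrite (Rabs_left1 (x - y)) by lra.
    pose proof (Rle_abs (dG a)). pose proof (Rle_abs (- dG a)). rewrite Rabs_Ropp in H4.
    pose proof (Rle_abs (dG b)). pose proof (Rle_abs (- dG b)). rewrite Rabs_Ropp in H6.
    apply Rabs_le. split; nra. }
  intros x y Hx Hy. destruct (Rle_dec x y).
  - apply W; auto.
  - rewrite Rabs_minus_sym, (Rabs_minus_sym x). apply W; auto; lra.
Qed.

Lemma uc_glue (F : R -> R) (K L1 L2 : R) : 0 < K -> 0 <= L1 -> 0 <= L2 ->
  (forall eps, 0 < eps -> exists delta, 0 < delta /\ forall x y, -K <= x <= K -> -K <= y <= K ->
       Rabs (x - y) < delta -> Rabs (F x - F y) < eps) ->
  (forall x y, K <= x -> K <= y -> Rabs (F x - F y) <= L1 * Rabs (x - y)) ->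
  (forall x y, x <= -K -> y <= -K -> Rabs (F x - F y) <= L2 * Rabs (x - y)) ->
  unif_continuous F.
Proof.
  intros HK HL1 HL2 Hmid Hr Hl eps Heps.
  destruct (Hmid (eps/3)) as [d1 [Hd1 Hd]]; [lra|].
  set (L := L1 + L2 + 1).
  exists (Rmin d1 (Rmin (2*K) (eps / (3 * L)))). split.
  { apply Rmin_pos; [lra|]. apply Rmin_pos; [lra|]. apply Rdiv_lt_0_compat; unfold L; lra. }
  assert (HeL : L * (eps / (3 * L)) = eps / 3) by (field; unfold L; lra).
  intros x y Hxy.
  pose proof (Rmin_l d1 (Rmin (2*K) (eps / (3 * L)))).
  pose proof (Rmin_r d1 (Rmin (2*K) (eps / (3 * L)))).
  pose proof (Rmin_l (2*K) (eps / (3 * L))). pose proof (Rmin_r (2*K) (eps / (3 * L))).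
  set (d := Rmin d1 (Rmin (2*K) (eps / (3 * L)))) in *.
  assert (Hlip : forall L0 u v, 0 <= L0 -> L0 <= L -> Rabs (u - v) < d -> L0 * Rabs (u - v) < eps / 3 + eps/3).
  { intros L0 u v HL0 HL0' Huv. pose proof (Rabs_pos (u - v)).
    assert (L0 * Rabs (u - v) <= L * Rabs (u - v)) by (apply Rmult_le_compat_r; lra).
    assert (L * Rabs (u - v) <= L * (eps / (3 * L))) by (apply Rmult_le_compat_l; [unfold L; lra | lra]).
    lra. }
  assert (HL1L : L1 <= L) by (unfold L; lra). assert (HL2L : L2 <= L) by (unfold L; lra).
  assert (Tri : forall p, Rabs (F x - F y) <= Rabs (F x - F p) + Rabs (F p - F y)).
  { intro p. replace (F x - F y) with ((F x - F p) + (F p - F y)) by ring. apply Rabs_triang. }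
  destruct (Rle_dec x (-K)); destruct (Rle_dec y (-K)); destruct (Rle_dec x K); destruct (Rle_dec y K);
  try (split_Rabs; lra).
  - pose proof (Hl x y r r0). pose proof (Hlip L2 x y HL2 HL2L Hxy). lra.
  -
    pose proof (Tri (-K)). pose proof (Hl x (-K) r ltac:(lra)).
    assert (Rabs (x - -K) <= Rabs (x - y)) by (split_Rabs; lra).
    assert (Rabs (x - -K) < d) by lra.
    pose proof (Hlip L2 x (-K) HL2 HL2L H6).
    assert (Rabs (- K - y) < d1) by (split_Rabs; lra).
    pose proof (Hd (-K) y ltac:(lra) ltac:(lra) H8). lra.
  -
    pose proof (Tri (-K)). pose proof (Hl (-K) y ltac:(lra) r).
    assert (Rabs (-K - y) <= Rabs (x - y)) by (split_Rabs; lra).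
    assert (Rabs (-K - y) < d) by lra.
    pose proof (Hlip L2 (-K) y HL2 HL2L H6).
    assert (Rabs (x - - K) < d1) by (split_Rabs; lra).
    pose proof (Hd x (-K) ltac:(lra) ltac:(lra) H8). lra.
  - assert (Rabs (F x - F y) < eps/3) by (apply Hd; lra). lra.
  -
    pose proof (Tri K). pose proof (Hr K y ltac:(lra) ltac:(lra)).
    assert (Rabs (K - y) <= Rabs (x - y)) by (split_Rabs; lra).
    assert (Rabs (K - y) < d) by lra.
    pose proof (Hlip L1 K y HL1 HL1L H6).
    assert (Rabs (x - K) < d1) by (split_Rabs; lra).
    pose proof (Hd x K ltac:(lra) ltac:(lra) H8). lra.
  -
    pose proof (Tri K). pose proof (Hr x K ltac:(lra) ltac:(lra)).
    assert (Rabs (x - K) <= Rabs (x - y)) by (split_Rabs; lra).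
    assert (Rabs (x - K) < d) by lra.
    pose proof (Hlip L1 x K HL1 HL1L H6).
    assert (Rabs (K - y) < d1) by (split_Rabs; lra).
    pose proof (Hd K y ltac:(lra) ltac:(lra) H8). lra.
  - pose proof (Hr x y ltac:(lra) ltac:(lra)). pose proof (Hlip L1 x y HL1 HL1L Hxy). lra.
Qed.

Lemma lip_ext (F : R -> R) (K X L al be : R) : K <= X -> 0 <= L ->
  (forall x, X <= x -> F x = al + be * x) ->
  (forall x y, K <= x <= X -> K <= y <= X -> Rabs (F x - F y) <= L * Rabs (x - y)) ->
  forall x y, K <= x -> K <= y -> Rabs (F x - F y) <= (L + Rabs be) * Rabs (x - y).
Proof.
  intros HKX HL Haff Hlip.
  assert (W : forall x y, K <= x -> x <= y -> Rabs (F x - F y) <= (L + Rabs be) * Rabs (x - y)).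
  { intros x y Hx Hxy. pose proof (Rabs_pos be). pose proof (Rabs_pos (x - y)).
    destruct (Rle_dec y X).
    - pose proof (Hlip x y ltac:(lra) ltac:(lra)). nra.
    - destruct (Rle_dec X x).
      + rewrite (Haff x), (Haff y) by lra.
        replace (al + be * x - (al + be * y)) with (be * (x - y)) by ring.
        rewrite Rabs_mult. nra.
      + pose proof (Hlip x X ltac:(lra) ltac:(lra)).
        rewrite (Haff y) by lra. rewrite (Haff X) in H1 by lra.
        replace (F x - (al + be * y)) with ((F x - (al + be * X)) + (be * (X - y))) by ring.
        pose proof (Rabs_triang (F x - (al + be * X)) (be * (X - y))).
        rewrite Rabs_mult in H2.
        rewrite (Rabs_left1 (X - y)) in H2 by lra.
        rewrite (Rabs_left1 (x - X)) in H1 by lra.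
        rewrite (Rabs_left1 (x - y)) by lra. nra. }
  intros x y Hx Hy. destruct (Rle_dec x y).
  - apply W; auto.
  - rewrite Rabs_minus_sym, (Rabs_minus_sym x). apply W; auto; lra.
Qed.

Lemma lip_ext_l (F : R -> R) (K X L al be : R) : K <= X -> 0 <= L ->
  (forall x, x <= - X -> F x = al + be * x) ->
  (forall x y, - X <= x <= - K -> - X <= y <= - K -> Rabs (F x - F y) <= L * Rabs (x - y)) ->
  forall x y, x <= - K -> y <= - K -> Rabs (F x - F y) <= (L + Rabs be) * Rabs (x - y).
Proof.
  intros HKX HL Haff Hlip x y Hx Hy.
  pose proof (lip_ext (fun u => F (- u)) K X L al (- be) HKX HL) as H.
  rewrite Rabs_Ropp in H.
  replace x with (- - x) by ring. replace y with (- - y) by ring.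
  replace (- - x - - - y) with (- (- x - - y)) by ring. rewrite Rabs_Ropp.
  apply H; try lra.
  - intros u Hu. rewrite Haff by lra. ring.
  - intros u v Hu Hv. replace (u - v) with (- (- u - - v)) by ring. rewrite Rabs_Ropp. apply Hlip; lra.
Qed.

Lemma is_derive_sub (F G : R -> R) x a b : is_derive F x a -> is_derive G x b ->
  is_derive (fun y => F y - G y) x (a - b).
Proof. intros. exact (is_derive_minus F G x a b H H0). Qed.

Lemma concave_add_affine (V : R -> R) c0 c1 : concave V -> concave (fun x => V x + c0 + c1 * x).
Proof. intros HV x y t Ht. pose proof (HV x y t Ht). lra. Qed.

Lemma abs_sub_le a b : Rabs (a - b) <= Rabs a + Rabs b.
Proof. split_Rabs; lra. Qed.

Theorem lemma2p1 (f gbar g Gam0 : R -> R) (iota : R)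
  (Hf : C2b f) (Hinff : exists c, 0 < c /\ forall x, c <= f x)
  (Hgbar_cont : forall x, continuous gbar x) (Hgbar_bd : bounded_fun gbar)
  (Hiota : 0 < iota) (Hgbar_rng : forall x, iota <= gbar x <= / f x - iota)
  (Hg_lsc : lower_semicontinuous g)
  (Hg_minus : exists M, forall x, - M <= g x)
  (Hg_plus : exists C, forall x, Rmax (g x) 0 <= C * (1 + Rabs x))
  (HGam0 : C2_with_second_deriv Gam0 gbar)
  (Hghat_uc : unif_continuous (ghat g Gam0)) :
  exists (gK : R -> R -> R) (xK : R -> R),
    (forall K, 0 < K ->
       unif_continuous (gK K) /\ K <= xK K /\
       (exists a b, forall x, xK K <= x -> gK K x = a * x + b) /\
       (exists a b, forall x, x <= - xK K -> gK K x = a * x + b) /\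
       (forall x, - K <= x <= K -> gK K x = ghat g Gam0 x) /\
       (forall x, ghat g Gam0 x <= gK K x) /\
       (forall Gam, C2_with_second_deriv Gam gbar ->
          concave (fun x => gK K x - Gam x))) /\
    (exists C, forall K x, 0 < K -> Rabs (gK K x) <= C * (1 + Rabs x)) /\
    (forall M eps, 0 < eps -> exists K0, 0 < K0 /\
       forall K x, K0 <= K -> Rabs x <= M -> Rabs (gK K x - ghat g Gam0 x) <= eps).
Proof.
  destruct HGam0 as [dG HdG].
  destruct Hg_minus as [M0 HM0].
  destruct Hg_plus as [C HC].
  assert (HC0 : 0 <= C).
  { specialize (HC 0). rewrite Rabs_R0 in HC. pose proof (Rmax_r (g 0) 0). lra. }
  assert (Hgb0 : forall x, 0 <= gbar x) by (intro x; specialize (Hgbar_rng x); lra).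
  assert (TG : forall x y, Gam0 x + dG x * (y - x) <= Gam0 y).
  { apply (tangent Gam0 dG gbar); intros; [apply HdG|apply HdG|apply Hgb0]. }
  assert (Hmono : forall x y, x <= y -> dG x <= dG y).
  { apply (mono_deriv dG gbar); intros; [apply HdG|apply Hgb0]. }
  assert (Hstr : forall x, Gam0 0 + dG 0 * x + iota / 2 * (x * x) <= Gam0 x).
  { intro x.
    assert (T' : forall x y, (Gam0 x - iota/2*(x*x)) + (dG x - iota * x) * (y - x) <= Gam0 y - iota/2*(y*y)).
    { apply (tangent (fun y => Gam0 y - iota/2 * (y*y)) (fun y => dG y - iota * y) (fun y => gbar y - iota)).
      - intro y. apply is_derive_sub. apply HdG.
        auto_derive. auto. change (iota / 2 * (1 * (y:R) + (y:R) * 1) = iota * (y:R)). field.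
      - intro y. apply is_derive_sub. apply HdG.
        auto_derive. auto. change (iota * 1 = iota). ring.
      - intro y. specialize (Hgbar_rng y). lra. }
    specialize (T' 0 x). lra. }
  pose (A := C + 2 * C * C / iota).
  assert (HA : C <= A).
  { unfold A. assert (0 <= 2 * C * C / iota) by (apply Rdiv_le_0_compat; nra). lra. }
  pose (G0r := fun x => if Rle_dec 0 x then Gam0 x else Gam0 0 + dG 0 * x).
  pose (Wr := fun x => A + C * x - G0r x).
  pose (G0l := fun x => if Rle_dec x 0 then Gam0 x else Gam0 0 + dG 0 * x).
  pose (Wl := fun x => A - C * x - G0l x).
  assert (HWr : concave Wr).
  { apply (concave_of_supp Wr (fun z => C - (if Rle_dec 0 z then dG z else dG 0))).
    intros z x. unfold Wr, G0r. destruct (Rle_dec 0 z); destruct (Rle_dec 0 x).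
    - pose proof (TG z x). lra.
    - pose proof (TG z 0). pose proof (Hmono 0 z r). nra.
    - pose proof (TG 0 x). lra.
    - lra. }
  assert (HWl : concave Wl).
  { apply (concave_of_supp Wl (fun z => - C - (if Rle_dec z 0 then dG z else dG 0))).
    intros z x. unfold Wl, G0l. destruct (Rle_dec z 0); destruct (Rle_dec x 0).
    - pose proof (TG z x). lra.
    - pose proof (TG z 0). pose proof (Hmono z 0 r). nra.
    - pose proof (TG 0 x). lra.
    - lra. }
  assert (HWrh : forall y, g y - Gam0 y <= Wr y).
  { intro y. unfold Wr, G0r. pose proof (HC y). pose proof (Rmax_l (g y) 0). pose proof (Hstr y).
    destruct (Rle_dec 0 y).
    - rewrite Rabs_pos_eq in H by lra. lra.
    - rewrite Rabs_left in H by lra.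
      assert (E: 2*C*C/iota + 2*C*y + iota/2*(y*y) = iota/2 * ((y + 2*C/iota)*(y + 2*C/iota))) by (field; lra).
      assert (0 <= iota/2 * ((y + 2*C/iota)*(y + 2*C/iota))) by (apply Rmult_le_pos; [lra | apply Rle_0_sqr]).
      unfold A. lra. }
  assert (HWlh : forall y, g y - Gam0 y <= Wl y).
  { intro y. unfold Wl, G0l. pose proof (HC y). pose proof (Rmax_l (g y) 0). pose proof (Hstr y).
    destruct (Rle_dec y 0).
    - rewrite Rabs_left1 in H by lra. lra.
    - rewrite Rabs_pos_eq in H by lra.
      assert (E: 2*C*C/iota - 2*C*y + iota/2*(y*y) = iota/2 * ((y - 2*C/iota)*(y - 2*C/iota))) by (field; lra).
      assert (0 <= iota/2 * ((y - 2*C/iota)*(y - 2*C/iota))) by (apply Rmult_le_pos; [lra | apply Rle_0_sqr]).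
      unfold A. lra. }
  destruct (conc_spec (fun y => g y - Gam0 y) Wr HWr HWrh) as [HU1 [HU2 HU3]].
  set (U := conc (fun y => g y - Gam0 y)) in *.
  assert (Hghat : forall x, ghat g Gam0 x = U x + Gam0 x) by reflexivity.
  assert (HUr : forall x, U x <= Wr x) by (apply HU2; auto).
  assert (HUl : forall x, U x <= Wl x) by (apply HU2; auto).
  pose (s := fun z => proj1_sig (supp U HU3 z)).
  assert (Hs : forall z x, U x <= U z + s z * (x - z)) by (intro z; exact (proj2_sig (supp U HU3 z))).
  assert (Hsm : forall z1 z2, z1 <= z2 -> s z2 <= s z1).
  { intros z1 z2 Hz. destruct (Rle_lt_or_eq_dec _ _ Hz) as [Hlt|<-]; [|lra].
    pose proof (Hs z1 z2). pose proof (Hs z2 z1). nra. }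
  pose (T := fun K x => if Rlt_dec K x then U K + s K * (x - K)
            else if Rlt_dec x (-K) then U (-K) + s (-K) * (x + K) else U x).
  assert (HTc : forall K, 0 < K -> concave (T K)).
  { intros K HK.
    apply (concave_of_supp (T K) (fun z => if Rlt_dec K z then s K else if Rlt_dec z (-K) then s (-K) else s z)).
    intros z x. unfold T.
    pose proof (Hsm (-K) K ltac:(lra)).
    destruct (Rlt_dec K z); destruct (Rlt_dec K x).
    - lra.
    - destruct (Rlt_dec x (-K)).
      + pose proof (Hs K (-K)). nra.
      + pose proof (Hs K x). nra.
    - destruct (Rlt_dec z (-K)).
      { pose proof (Hs (-K) K). assert ((s K - s (-K)) * (x - K) <= 0) by (apply Rmult_le_0_r; lra). nra. }
      pose proof (Hs z K). pose proof (Hsm z K ltac:(lra)). nra.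
    - destruct (Rlt_dec z (-K)); destruct (Rlt_dec x (-K)).
      + lra.
      + pose proof (Hs (-K) x). nra.
      + pose proof (Hs z (-K)). pose proof (Hsm (-K) z ltac:(lra)). nra.
      + apply Hs. }
  assert (HTU : forall K x, U x <= T K x).
  { intros K x. unfold T. destruct (Rlt_dec K x); [apply Hs|].
    destruct (Rlt_dec x (-K)); [pose proof (Hs (-K) x); lra|lra]. }
  assert (HTmid : forall K x, - K <= x <= K -> T K x = U x).
  { intros K x Hx. unfold T. destruct (Rlt_dec K x); [lra|]. destruct (Rlt_dec x (-K)); [lra|auto]. }
  assert (HTr : forall K x, 0 < K -> K <= x -> T K x = U K + s K * (x - K)).
  { intros K x HK Hx. unfold T. destruct (Rlt_dec K x); [auto|].
    assert (x = K) by lra. subst x. destruct (Rlt_dec K (-K)); [lra|]. ring. }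
  assert (HTl : forall K x, 0 < K -> x <= - K -> T K x = U (- K) + s (- K) * (x + K)).
  { intros K x HK Hx. unfold T. destruct (Rlt_dec K x); [lra|].
    destruct (Rlt_dec x (-K)); [auto|].
    assert (x = - K) by lra. subst x. ring. }
  pose (V := fun K x => Rmin (T K x) (Rmin (Wr x) (Wl x))).
  assert (HVc : forall K, 0 < K -> concave (V K)).
  { intros K HK. apply concave_min; [auto|]. apply concave_min; auto. }
  assert (HVU : forall K x, U x <= V K x).
  { intros K x. unfold V. apply Rmin_glb; [auto|]. apply Rmin_glb; auto. }
  assert (HVmid : forall K x, - K <= x <= K -> V K x = U x).
  { intros K x Hx. unfold V. rewrite HTmid by auto. apply Rmin_left. apply Rmin_glb; auto. }
  pose (gK := fun K x => V K x + Gam0 x).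
  pose (aK := fun K => Rabs (A - Gam0 0) + Rabs (U K) + Rabs (U (-K)) + (Rabs (s K) + Rabs (s (-K))) * Rabs K).
  pose (bK := fun K => C + Rabs (dG 0) + Rabs (s K) + Rabs (s (-K))).
  pose (xK := fun K => Rmax K (Rmax 1 (Rmax (4*C/iota) (2*(aK K + bK K)/iota)))).
  assert (HxK : forall K, K <= xK K /\ 1 <= xK K /\ 4 * C/iota <= xK K /\ 2*(aK K + bK K)/iota <= xK K).
  { intro K. unfold xK.
    pose proof (Rmax_l K (Rmax 1 (Rmax (4*C/iota) (2*(aK K + bK K)/iota)))).
    pose proof (Rmax_r K (Rmax 1 (Rmax (4*C/iota) (2*(aK K + bK K)/iota)))).
    pose proof (Rmax_l 1 (Rmax (4*C/iota) (2*(aK K + bK K)/iota))).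
    pose proof (Rmax_r 1 (Rmax (4*C/iota) (2*(aK K + bK K)/iota))).
    pose proof (Rmax_l (4*C/iota) (2*(aK K + bK K)/iota)).
    pose proof (Rmax_r (4*C/iota) (2*(aK K + bK K)/iota)).
    lra. }
  assert (Hab : forall K, 0 <= aK K /\ 0 <= bK K).
  { intro K. unfold aK, bK. pose proof (Rabs_pos (A - Gam0 0)). pose proof (Rabs_pos (U K)).
    pose proof (Rabs_pos (U (-K))). pose proof (Rabs_pos (s K)). pose proof (Rabs_pos (s (-K))).
    pose proof (Rabs_pos K). pose proof (Rabs_pos (dG 0)). nra. }
  assert (Hright : forall K x, 0 < K -> xK K <= x -> gK K x = A + C * x).
  { intros K x HK Hx. destruct (HxK K) as [H1 [H2 [H3 H4]]]. destruct (Hab K) as [Ha Hb].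
    assert (HxC : 4 * C <= iota * x).
    { assert (iota * (4 * C / iota) = 4 * C) by (field; lra).
      assert (iota * (4 * C / iota) <= iota * x) by (apply Rmult_le_compat_l; lra). lra. }
    assert (Hxab : 2 * (aK K + bK K) <= iota * x).
    { assert (iota * (2 * (aK K + bK K) / iota) = 2 * (aK K + bK K)) by (field; lra).
      assert (iota * (2 * (aK K + bK K) / iota) <= iota * x) by (apply Rmult_le_compat_l; lra). lra. }
    assert (EWr : Wr x = A + C * x - Gam0 x).
    { unfold Wr, G0r. destruct (Rle_dec 0 x); [auto|lra]. }
    assert (EWl : Wl x = A - C * x - (Gam0 0 + dG 0 * x)).
    { unfold Wl, G0l. destruct (Rle_dec x 0); [lra|auto]. }
    pose proof (Hstr x).
    assert (L1 : Wr x <= Wl x).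
    { rewrite EWr, EWl. assert (0 <= (iota * x - 4 * C) * x) by (apply Rmult_le_pos; lra). nra. }
    assert (L2 : Wr x <= T K x).
    { rewrite EWr, (HTr K x HK) by lra.
      assert (- Rabs (s K) * x <= s K * x).
      { apply Rmult_le_compat_r; [lra|]. pose proof (Rle_abs (- s K)) as Hra; rewrite Rabs_Ropp in Hra. lra. }
      assert (s K * K <= Rabs (s K) * Rabs K) by (rewrite <- Rabs_mult; apply Rle_abs).
      assert (- dG 0 * x <= Rabs (dG 0) * x).
      { apply Rmult_le_compat_r; [lra|]. pose proof (Rle_abs (- dG 0)) as Hra; rewrite Rabs_Ropp in Hra. lra. }
      pose proof (Rle_abs (A - Gam0 0)). pose proof (Rle_abs (- U K)) as Hra; rewrite Rabs_Ropp in Hra.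
      assert (HX : Rabs (A - Gam0 0) + Rabs (U K) + Rabs (s K) * Rabs K + (C + Rabs (dG 0) + Rabs (s K)) * x
                   <= aK K + bK K * x).
      { unfold aK, bK. pose proof (Rabs_pos (U (-K))). pose proof (Rabs_pos (s (-K))). pose proof (Rabs_pos K).
        assert (0 <= Rabs (s (-K)) * Rabs K) by (apply Rmult_le_pos; lra).
        assert (0 <= Rabs (s (-K)) * x) by (apply Rmult_le_pos; lra). nra. }
      assert (aK K <= aK K * x) by (rewrite <- (Rmult_1_r (aK K)) at 1; apply Rmult_le_compat_l; lra).
      assert ((aK K + bK K) * x <= (iota * x / 2) * x) by (apply Rmult_le_compat_r; lra).
      nra. }
    unfold gK, V. rewrite (Rmin_left (Wr x) (Wl x)) by auto. rewrite Rmin_right by auto. rewrite EWr. ring. }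
  assert (Hleft : forall K x, 0 < K -> x <= - xK K -> gK K x = A - C * x).
  { intros K x HK Hx. destruct (HxK K) as [H1 [H2 [H3 H4]]]. destruct (Hab K) as [Ha Hb].
    assert (HxC : 4 * C <= iota * (- x)).
    { assert (iota * (4 * C / iota) = 4 * C) by (field; lra).
      assert (iota * (4 * C / iota) <= iota * (- x)) by (apply Rmult_le_compat_l; lra). lra. }
    assert (Hxab : 2 * (aK K + bK K) <= iota * (- x)).
    { assert (iota * (2 * (aK K + bK K) / iota) = 2 * (aK K + bK K)) by (field; lra).
      assert (iota * (2 * (aK K + bK K) / iota) <= iota * (- x)) by (apply Rmult_le_compat_l; lra). lra. }
    assert (EWl : Wl x = A - C * x - Gam0 x).
    { unfold Wl, G0l. destruct (Rle_dec x 0); [auto|lra]. }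
    assert (EWr : Wr x = A + C * x - (Gam0 0 + dG 0 * x)).
    { unfold Wr, G0r. destruct (Rle_dec 0 x); [lra|auto]. }
    pose proof (Hstr x).
    assert (L1 : Wl x <= Wr x).
    { rewrite EWr, EWl. assert (0 <= (iota * (- x) - 4 * C) * (- x)) by (apply Rmult_le_pos; lra). nra. }
    assert (L2 : Wl x <= T K x).
    { rewrite EWl, (HTl K x HK) by lra.
      assert (s (-K) * (- x) <= Rabs (s (-K)) * (- x)).
      { apply Rmult_le_compat_r; [lra|]. apply Rle_abs. }
      assert (- (s (-K) * K) <= Rabs (s (-K)) * Rabs K).
      { rewrite <- Rabs_mult. pose proof (Rle_abs (- (s (-K) * K))) as Hra; rewrite Rabs_Ropp in Hra. lra. }
      assert (dG 0 * (- x) <= Rabs (dG 0) * (- x)).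
      { apply Rmult_le_compat_r; [lra|]. apply Rle_abs. }
      pose proof (Rle_abs (A - Gam0 0)). pose proof (Rle_abs (- U (-K))) as Hra; rewrite Rabs_Ropp in Hra.
      assert (HX : Rabs (A - Gam0 0) + Rabs (U (-K)) + Rabs (s (-K)) * Rabs K + (C + Rabs (dG 0) + Rabs (s (-K))) * (- x)
                   <= aK K + bK K * (- x)).
      { unfold aK, bK. pose proof (Rabs_pos (U K)). pose proof (Rabs_pos (s K)). pose proof (Rabs_pos K).
        assert (0 <= Rabs (s K) * Rabs K) by (apply Rmult_le_pos; lra).
        assert (0 <= Rabs (s K) * (- x)) by (apply Rmult_le_pos; lra). nra. }
      assert (aK K <= aK K * (- x)) by (rewrite <- (Rmult_1_r (aK K)) at 1; apply Rmult_le_compat_l; lra).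
      assert ((aK K + bK K) * (- x) <= (iota * (- x) / 2) * (- x)) by (apply Rmult_le_compat_r; lra).
      nra. }
    unfold gK, V. rewrite (Rmin_right (Wr x) (Wl x)) by auto. rewrite Rmin_right by auto. rewrite EWl. ring. }
  assert (Hupper : forall K x, gK K x <= A + C * Rabs x).
  { intros K x. unfold gK, V. pose proof (Rmin_r (T K x) (Rmin (Wr x) (Wl x))).
    pose proof (Rmin_l (Wr x) (Wl x)). pose proof (Rmin_r (Wr x) (Wl x)).
    destruct (Rle_dec 0 x).
    - rewrite Rabs_pos_eq by lra.
      assert (Wr x = A + C * x - Gam0 x) by (unfold Wr, G0r; destruct (Rle_dec 0 x); [auto|lra]). lra.
    - rewrite Rabs_left by lra.
      assert (Wl x = A - C * x - Gam0 x) by (unfold Wl, G0l; destruct (Rle_dec x 0); [auto|lra]). lra. }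
  assert (Hlower : forall K x, g x <= gK K x).
  { intros K x. unfold gK. pose proof (HU1 x). pose proof (HVU K x). lra. }
  assert (Hlipr : forall K, 0 < K -> forall x y, K <= x <= xK K -> K <= y <= xK K ->
     Rabs (gK K x - gK K y) <= (Rabs (s K) + Rabs C + Rabs (C + dG 0) + 2 * (Rabs (dG (- xK K)) + Rabs (dG (xK K)))) * Rabs (x - y)).
  { intros K HK x y Hx Hy.
    pose proof (lip_tan Gam0 dG (- xK K) (xK K) TG Hmono x y ltac:(lra) ltac:(lra)) as HG.
    set (Lg := Rabs (dG (- xK K)) + Rabs (dG (xK K))) in *.
    unfold gK, V. eapply Rle_trans; [apply min3_lip|].
    rewrite (HTr K x HK), (HTr K y HK) by lra.
    assert (EWrx : Wr x = A + C * x - Gam0 x) by (unfold Wr, G0r; destruct (Rle_dec 0 x); [auto|lra]).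
    assert (EWry : Wr y = A + C * y - Gam0 y) by (unfold Wr, G0r; destruct (Rle_dec 0 y); [auto|lra]).
    assert (EWlx : Wl x = A - C * x - (Gam0 0 + dG 0 * x)) by (unfold Wl, G0l; destruct (Rle_dec x 0); [lra|auto]).
    assert (EWly : Wl y = A - C * y - (Gam0 0 + dG 0 * y)) by (unfold Wl, G0l; destruct (Rle_dec y 0); [lra|auto]).
    rewrite EWrx, EWry, EWlx, EWly.
    replace (U K + s K * (x - K) - (U K + s K * (y - K))) with (s K * (x - y)) by ring.
    replace (A + C * x - Gam0 x - (A + C * y - Gam0 y)) with (C * (x - y) - (Gam0 x - Gam0 y)) by ring.
    replace (A - C * x - (Gam0 0 + dG 0 * x) - (A - C * y - (Gam0 0 + dG 0 * y))) with (- (C + dG 0) * (x - y)) by ring.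
    pose proof (abs_sub_le (C * (x - y)) (Gam0 x - Gam0 y)).
    rewrite !Rabs_mult in *. rewrite Rabs_Ropp. pose proof (Rabs_pos (x - y)). lra. }
  assert (Hlipl : forall K, 0 < K -> forall x y, - xK K <= x <= - K -> - xK K <= y <= - K ->
     Rabs (gK K x - gK K y) <= (Rabs (s (-K)) + Rabs C + Rabs (C - dG 0) + 2 * (Rabs (dG (- xK K)) + Rabs (dG (xK K)))) * Rabs (x - y)).
  { intros K HK x y Hx Hy.
    pose proof (lip_tan Gam0 dG (- xK K) (xK K) TG Hmono x y ltac:(lra) ltac:(lra)) as HG.
    set (Lg := Rabs (dG (- xK K)) + Rabs (dG (xK K))) in *.
    unfold gK, V. eapply Rle_trans; [apply min3_lip|].
    rewrite (HTl K x HK), (HTl K y HK) by lra.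
    assert (EWlx : Wl x = A - C * x - Gam0 x) by (unfold Wl, G0l; destruct (Rle_dec x 0); [auto|lra]).
    assert (EWly : Wl y = A - C * y - Gam0 y) by (unfold Wl, G0l; destruct (Rle_dec y 0); [auto|lra]).
    assert (EWrx : Wr x = A + C * x - (Gam0 0 + dG 0 * x)) by (unfold Wr, G0r; destruct (Rle_dec 0 x); [lra|auto]).
    assert (EWry : Wr y = A + C * y - (Gam0 0 + dG 0 * y)) by (unfold Wr, G0r; destruct (Rle_dec 0 y); [lra|auto]).
    rewrite EWrx, EWry, EWlx, EWly.
    replace (U (-K) + s (-K) * (x + K) - (U (-K) + s (-K) * (y + K))) with (s (-K) * (x - y)) by ring.
    replace (A - C * x - Gam0 x - (A - C * y - Gam0 y)) with ((- C) * (x - y) - (Gam0 x - Gam0 y)) by ring.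
    replace (A + C * x - (Gam0 0 + dG 0 * x) - (A + C * y - (Gam0 0 + dG 0 * y))) with ((C - dG 0) * (x - y)) by ring.
    pose proof (abs_sub_le ((- C) * (x - y)) (Gam0 x - Gam0 y)).
    rewrite !Rabs_mult in *. rewrite Rabs_Ropp in *. pose proof (Rabs_pos (x - y)). lra. }
  exists gK, xK. split; [|split].
  - intros K HK. destruct (HxK K) as [H1 [H2 [H3 H4]]]. split; [|split; [lra|split; [|split; [|split; [|split]]]]].
    + apply (uc_glue (gK K) K
        ((Rabs (s K) + Rabs C + Rabs (C + dG 0) + 2 * (Rabs (dG (- xK K)) + Rabs (dG (xK K)))) + Rabs C)
        ((Rabs (s (-K)) + Rabs C + Rabs (C - dG 0) + 2 * (Rabs (dG (- xK K)) + Rabs (dG (xK K)))) + Rabs (- C))); auto.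
      * pose proof (Rabs_pos (s K)). pose proof (Rabs_pos C). pose proof (Rabs_pos (C + dG 0)).
        pose proof (Rabs_pos (dG (- xK K))). pose proof (Rabs_pos (dG (xK K))). lra.
      * pose proof (Rabs_pos (s (-K))). pose proof (Rabs_pos C). pose proof (Rabs_pos (C - dG 0)).
        pose proof (Rabs_pos (dG (- xK K))). pose proof (Rabs_pos (dG (xK K))). pose proof (Rabs_pos (- C)). lra.
      * intros eps Heps. destruct (Hghat_uc eps Heps) as [d [Hd Hdd]]. exists d. split; auto.
        intros x y Hx Hy Hxy. unfold gK. rewrite (HVmid K x Hx), (HVmid K y Hy).
        rewrite <- !Hghat. apply Hdd, Hxy.
      * apply (lip_ext (gK K) K (xK K) _ A C); [lra| | |apply Hlipr; auto].
        -- pose proof (Rabs_pos (s K)). pose proof (Rabs_pos C). pose proof (Rabs_pos (C + dG 0)).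
           pose proof (Rabs_pos (dG (- xK K))). pose proof (Rabs_pos (dG (xK K))). lra.
        -- intros x Hx. apply Hright; auto.
      * apply (lip_ext_l (gK K) K (xK K) _ A (- C)); [lra| | |apply Hlipl; auto].
        -- pose proof (Rabs_pos (s (-K))). pose proof (Rabs_pos C). pose proof (Rabs_pos (C - dG 0)).
           pose proof (Rabs_pos (dG (- xK K))). pose proof (Rabs_pos (dG (xK K))). lra.
        -- intros x Hx. rewrite Hleft; auto. ring.
    + exists C, A. intros x Hx. rewrite Hright; auto. ring.
    + exists (- C), A. intros x Hx. rewrite Hleft; auto. ring.
    + intros x Hx. unfold gK. rewrite HVmid by auto. rewrite Hghat. reflexivity.
    + intros x. unfold gK. rewrite Hghat. pose proof (HVU K x). lra.
    + intros Gam [dGam HdGam].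
      assert (E1 : forall x, (Gam0 0 - Gam 0) + (dG 0 - dGam 0) * (x - 0) <= Gam0 x - Gam x).
      { apply (tangent (fun y => Gam0 y - Gam y) (fun y => dG y - dGam y) (fun y => gbar y - gbar y)).
        - intro y. apply is_derive_sub; apply HdG || apply HdGam.
        - intro y. apply is_derive_sub; [apply HdG | apply HdGam].
        - intro y. lra. }
      assert (E2 : forall x, (Gam 0 - Gam0 0) + (dGam 0 - dG 0) * (x - 0) <= Gam x - Gam0 x).
      { apply (tangent (fun y => Gam y - Gam0 y) (fun y => dGam y - dG y) (fun y => gbar y - gbar y)).
        - intro y. apply is_derive_sub; [apply HdGam | apply HdG].
        - intro y. apply is_derive_sub; [apply HdGam | apply HdG].
        - intro y. lra. }
      assert (E : forall x, gK K x - Gam x = V K x + (Gam0 0 - Gam 0) + (dG 0 - dGam 0) * x).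
      { intro x. unfold gK. pose proof (E1 x). pose proof (E2 x). lra. }
      intros x y t Ht. rewrite !E.
      exact (concave_add_affine (V K) (Gam0 0 - Gam 0) (dG 0 - dGam 0) (HVc K HK) x y t Ht).
  - exists (Rabs M0 + A + C). intros K x HK.
    pose proof (Hupper K x). pose proof (Hlower K x). pose proof (HM0 x).
    pose proof (Rabs_pos x). pose proof (Rle_abs (- M0)) as Hm. rewrite Rabs_Ropp in Hm.
    pose proof (Rabs_pos M0).
    assert (0 <= (Rabs M0 + A) * Rabs x) by (apply Rmult_le_pos; lra).
    assert (0 <= C * Rabs x) by (apply Rmult_le_pos; lra).
    pose proof (Rle_abs M0). apply Rabs_le. split; nra.
  - intros Mx eps Heps. exists (Rmax 1 Mx). split.
    + pose proof (Rmax_l 1 Mx). lra.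
    + intros K x HK Hx. pose proof (Rmax_l 1 Mx). pose proof (Rmax_r 1 Mx).
      assert (Hx' : - K <= x <= K) by (split_Rabs; lra).
      unfold gK. rewrite (HVmid K x Hx'), Hghat.
      replace (U x + Gam0 x - (U x + Gam0 x)) with 0 by ring. rewrite Rabs_R0. lra.
Qed.
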